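(* For every integer $m\geq 2$ and every integer $n\geq 3$, the graph $mTL_n$ (the disjoint union of $m$ copies of the triangular ladder $TL_n$) is $C_3$-supermagic.
   Context: All graphs are finite and simple. For a graph $H$, a graph $G=(V,E)$ has an $H$-covering if every edge of $G$ belongs to a subgraph of $G$ isomorphic to $H$. For such $G$, an $H$-magic labeling is a bijection $\lambda: V\cup E\to\{1,2,\dots,|V|+|E|\}$ for which there is a constant $c$ such that for every subgraph $H'=(V',E')$ of $G$ isomorphic to $H$, $\sum_{v\in V'}\lambda(v)+\sum_{e\in E'}\lambda(e)=c$. It is $H$-supermagic if moreover $\{\lambda(v):v\in V\}=\{1,\dots,|V|\}$; $G$ is $H$-supermagic if it admits such a labeling. $C_k$ is the cycle of length $k$. $mG$ denotes the disjoint union of $m$ copies of $G$. The triangular ladder $TL_n$ has vertices $u_i,v_i$ ($1\le i\le n$) and edges $u_iv_i$ ($1\le i\le n$), and $u_iu_{i+1}$, $v_iv_{i+1}$, $u_{i+1}v_i$ ($1\le i\le n-1$). *)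

(* Defs.v *)
From mathcomp Require Import all_boot.
Unset Printing Implicit Defensive.

(* A finite simple graph is a finType V of vertices with a symmetric,
   irreflexive adjacency relation adj : rel V.  Edges are the 2-element
   vertex sets {x, y} with adj x y. *)

Definition edge_set {V : finType} (adj : rel V) : {set {set V}} :=
  [set e : {set V} | [exists x, exists y, adj x y && (e == [set x; y])]].

Definition edge_type {V : finType} (adj : rel V) : finType :=
  {e : {set V} | e \in edge_set adj}.

Definition elt_type {V : finType} (adj : rel V) : finType :=
  (V + edge_type adj)%type.

Definition subgraph_iso {V W : finType} (adj : rel V) (adjH : rel W)
    (V' : {set V}) (E' : {set edge_type adj}) : Prop :=
  (forall e : edge_type adj, e \in E' -> val e \subset V') /\
  exists f : W -> V, injective f /\ V' = f @: [set: W] /\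
    forall a b, adjH a b = ([set f a; f b] \in [set val e | e in E']).

Definition H_covering {V W : finType} (adj : rel V) (adjH : rel W) : Prop :=
  forall e : edge_type adj, exists V' E',
    subgraph_iso adj adjH V' E' /\ e \in E'.

Definition weight {V : finType} (adj : rel V) (lam : elt_type adj -> nat)
    (V' : {set V}) (E' : {set edge_type adj}) : nat :=
  \sum_(v in V') lam (inl v) + \sum_(e in E') lam (inr e).

Definition total_labeling {V : finType} (adj : rel V)
    (lam : elt_type adj -> nat) : Prop :=
  injective lam /\
  forall k, (0 < k <= #|V| + #|edge_set adj|) <-> exists x, lam x = k.

Definition H_magic_labeling {V W : finType} (adj : rel V) (adjH : rel W)
    (lam : elt_type adj -> nat) : Prop :=
  total_labeling adj lam /\
  exists c, forall V' E', subgraph_iso adj adjH V' E' -> weight adj lam V' E' = c.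

Definition H_supermagic_labeling {V W : finType} (adj : rel V) (adjH : rel W)
    (lam : elt_type adj -> nat) : Prop :=
  H_magic_labeling adj adjH lam /\
  forall k, (0 < k <= #|V|) <-> exists v, lam (inl v) = k.

Definition H_supermagic {V W : finType} (adj : rel V) (adjH : rel W) : Prop :=
  H_covering adj adjH /\ exists lam, H_supermagic_labeling adj adjH lam.

Definition cycle_adj (k : nat) : rel 'I_k :=
  fun i j => (val j == (val i).+1 %% k) || (val i == (val j).+1 %% k).

(* Triangular ladder TL_n: vertex (i, false) = u_{i+1}, (i, true) = v_{i+1}
   (0-based indices).  Edges u_i v_i, u_i u_{i+1}, v_i v_{i+1}, u_{i+1} v_i. *)
Definition TL_adj (n : nat) : rel ('I_n * bool) :=
  fun x y =>
    let: (i, a) := x in let: (j, b) := y in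
    [|| (i == j) && (a != b),
        (a == b) && ((val j == (val i).+1) || (val i == (val j).+1)),
        [&& ~~ a, b & val i == (val j).+1] |
        [&& a, ~~ b & val j == (val i).+1] ].

Definition copies_adj (m : nat) {V : finType} (adj : rel V) : rel ('I_m * V) :=
  fun x y => (x.1 == y.1) && adj x.2 y.2.

(* Main.v *)
Require Import Defs.
From mathcomp Require Import all_boot zify.
Set Implicit Arguments.


Definition pos {n} (x : 'I_n * bool) : nat := (nat_of_ord x.1).*2 + x.2.

Lemma pos_inj n : injective (@pos n).
Proof.
move=> [i a] [j b]; rewrite /pos /= => h.
have hab : a = b by case: a b h => [] [] /=; lia.
subst b; congr (_, _); apply: val_inj => /=; lia.
Qed.

Lemma pos_lt n (x : 'I_n * bool) : pos x < n.*2.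
Proof. case: x => [i a]; rewrite /pos /=; have := ltn_ord i; case: a => /=; lia. Qed.

Definition posinv n (p : nat) : 'I_n.+1 * bool := (inord (p./2), odd p).

Lemma pos_posinv n p : p < (n.+1).*2 -> pos (posinv n p) = p.
Proof.
move=> hp; rewrite /pos /posinv /= inordK; last by lia.
by rewrite addnC odd_double_half.
Qed.

Lemma posinv_pos n (x : 'I_n.+1 * bool) : posinv n (pos x) = x.
Proof. apply: pos_inj; by rewrite pos_posinv // pos_lt. Qed.

Definition drel (p q : nat) : bool :=
  [|| q == p + 1, p == q + 1, q == p + 2 | p == q + 2].

Lemma TL_adjE n x y : TL_adj n x y = drel (pos x) (pos y).
Proof.
case: x y => [i a] [j b]; rewrite /TL_adj /drel /pos /=.
have E : (i == j) = (nat_of_ord i == nat_of_ord j) by [].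
rewrite E; case: a; case: b => /=; lia.
Qed.

Lemma cycle3E (a b : 'I_3) : cycle_adj 3 a b = (a != b).
Proof.
by case: a b => [[|[|[|a]]] ha] [[|[|[|b]]] hb].
Qed.


Notation Adj m n := (copies_adj m (TL_adj n.+1)).

Lemma adjE m n (x y : 'I_m * ('I_n.+1 * bool)) :
  Adj m n x y = (x.1 == y.1) && drel (pos x.2) (pos y.2).
Proof. by rewrite /copies_adj TL_adjE. Qed.

Lemma adj_sym m n x y : Adj m n x y = Adj m n y x.
Proof. rewrite !adjE eq_sym /drel; congr (_ && _); lia. Qed.

Lemma adj_neq m n x y : Adj m n x y -> x != y.
Proof. rewrite adjE; apply: contraTneq => ->; rewrite /drel; lia. Qed.

Lemma set2_eq (T : finType) (a b x y : T) : a != b -> [set a; b] = [set x; y] ->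
  (a = x /\ b = y) \/ (a = y /\ b = x).
Proof.
move=> ab E.
have ha : a \in [set x; y] by rewrite -E set21.
have hb : b \in [set x; y] by rewrite -E set22.
have hx : x \in [set a; b] by rewrite E set21.
have hy : y \in [set a; b] by rewrite E set22.
move: ha hb hx hy; rewrite !inE.
case/orP=> /eqP ha; case/orP=> /eqP hb; subst; rewrite ?eqxx //= ?orbF; try by left.
- by move: ab; rewrite eqxx.
- by right.
- by move: ab; rewrite eqxx.
Qed.

Lemma edgeP m n (e : edge_type (Adj m n)) :
  exists j x y, val e = [set (j, x); (j, y)] /\ (pos y = pos x + 1 \/ pos y = pos x + 2).
Proof.
have := valP e; rewrite inE => /existsP [u /existsP [w /andP [h /eqP E]]].
move: h; rewrite adjE => /andP [/eqP hj hd].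
case: u w hj E hd => [j x] [j' y] /= <- E hd.
move: hd; rewrite /drel => /orP [/eqP h|/orP [/eqP h|/orP [/eqP h|/eqP h]]].
- by exists j, x, y; split => //; left.
- by exists j, y, x; rewrite E setUC; split => //; left.
- by exists j, x, y; split => //; right.
- by exists j, y, x; rewrite E setUC; split => //; right.
Qed.

Lemma mkedge_prf m n x y : Adj m n x y -> [set x; y] \in edge_set (Adj m n).
Proof.
by move=> h; rewrite inE; apply/existsP; exists x; apply/existsP; exists y; rewrite h eqxx.
Qed.

Definition mkedge m n x y (h : Adj m n x y) : edge_type (Adj m n) :=
  exist _ [set x; y] (@mkedge_prf m n x y h).

Lemma sum_set2 (T : finType) (F : T -> nat) a b : a != b ->
  \sum_(x in [set a; b]) F x = F a + F b.
Proof. by move=> ab; rewrite big_setU1 ?big_set1 // inE. Qed.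

Lemma sum_set3 (T : finType) (F : T -> nat) a b c : a != b -> a != c -> b != c ->
  \sum_(x in [set a; b; c]) F x = F a + F b + F c.
Proof.
move=> ab ac bc; rewrite -setUA big_setU1 ?sum_set2 //=; [by rewrite addnA | by rewrite !inE negb_or ab ac].
Qed.


Definition cA m n := 6 * (m * n.+1) - 3 * m.
Definition cB m n := 4 * (m * n.+1) - 2 * m.

Definition L m n (j s : nat) :=
  if odd s then cA m n - m * s./2 - j else cB m n - m * (s./2).-1 - j.

Lemma Lodd m n j p : L m n j (p.*2.+1) = cA m n - m * p - j.
Proof. by rewrite /L /= odd_double /= uphalf_double. Qed.

Lemma Leven m n j p : L m n j (p.*2.+2) = cB m n - m * p - j.
Proof.
by rewrite /L /= odd_double /= doubleK.
Qed.

Definition lamV m n (v : 'I_m * ('I_n.+1 * bool)) := m * pos v.2 + v.1 + 1.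

Definition lamEs m n (S : {set 'I_m * ('I_n.+1 * bool)}) :=
  L m n ((\sum_(v in S) nat_of_ord v.1)./2) (\sum_(v in S) pos v.2).

Definition lamE m n (e : edge_type (Adj m n)) := @lamEs m n (val e).

Definition lam m n (x : elt_type (Adj m n)) : nat :=
  match x with inl v => @lamV m n v | inr e => @lamE m n e end.

Lemma lamEs_pair m n (j : 'I_m) x y : x != y ->
  @lamEs m n [set (j, x); (j, y)] = L m n j (pos x + pos y).
Proof.
move=> xy; have jxy : (j, x) != (j, y) by rewrite xpair_eqE eqxx.
rewrite /lamEs !sum_set2 //= addnn doubleK //.
Qed.

Lemma edge_lab m n (e : edge_type (Adj m n)) : exists (j : 'I_m) x y,
  val e = [set (j, x); (j, y)] /\
  ((pos y = pos x + 1 /\ @lamE m n e = cA m n - m * pos x - j) \/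
   (pos y = pos x + 2 /\ @lamE m n e = cB m n - m * pos x - j)).
Proof.
have [j [x [y [E hd]]]] := @edgeP m n e.
have xy : x != y by apply/eqP => exy; subst; lia.
exists j, x, y; split => //; rewrite /lamE E lamEs_pair //.
case: hd => hd; [left|right]; split => //; rewrite hd.
  by rewrite -Lodd; congr L; lia.
by rewrite -Leven; congr L; lia.
Qed.


Lemma mp_inj m p j p' j' : j < m -> j' < m -> m * p + j = m * p' + j' -> p = p' /\ j = j'.
Proof.
move=> hj hj' E.
have m0 : 0 < m by lia.
have h1 := congr1 (fun k => k %/ m) E; have h2 := congr1 (fun k => k %% m) E.
move: h1 h2 => /=; rewrite ![m * _]mulnC !divnMDl // !modnMDl !divn_small // !modn_small //.
by rewrite !addn0 => -> ->.
Qed.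

Lemma mp_dec m K k : k < m * K -> exists p j, [/\ p < K, j < m & k = m * p + j].
Proof.
move=> hk; have m0 : 0 < m by case: m hk => //; rewrite mul0n.
exists (k %/ m), (k %% m); split; first by rewrite ltn_divLR // mulnC.
  by rewrite ltn_mod.
by rewrite mulnC -divn_eq.
Qed.

Lemma mul_le m a b : a <= b -> m * a <= m * b.
Proof. by move=> h; apply: leq_mul. Qed.


Lemma lt_fact m p K : p < K -> m * p + m <= m * K.
Proof. by move=> h; rewrite addnC -mulnS; apply: mul_le. Qed.

Lemma lamV_range m n (v : 'I_m * ('I_n.+1 * bool)) :
  0 < lamV v <= (m * n.+1).*2.
Proof.
rewrite /lamV; have := @lt_fact m _ _ (pos_lt v.2); rewrite -doubleMr.
have := ltn_ord v.1; lia.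
Qed.

Lemma edge_lab2 m n (e : edge_type (Adj m n)) : exists (j : 'I_m) x y,
  val e = [set (j, x); (j, y)] /\
  ((pos y = pos x + 1 /\ lamE e = cA m n - m * pos x - j /\ m * pos x + m * 2 <= (m * n.+1).*2) \/
   (pos y = pos x + 2 /\ lamE e = cB m n - m * pos x - j /\ m * pos x + m * 3 <= (m * n.+1).*2)).
Proof.
have [j [x [y [E [[h1 h2]|[h1 h2]]]]]] := @edge_lab m n e; exists j, x, y; split => //.
  left; do 2!split => //; rewrite -mulnDr doubleMr; apply: mul_le.
  have := pos_lt y; lia.
right; do 2!split => //; rewrite -mulnDr doubleMr; apply: mul_le.
have := pos_lt y; lia.
Qed.

Lemma lamE_range m n (e : edge_type (Adj m n)) :
  (m * n.+1).*2 < lamE e <= cA m n.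
Proof.
have [j [x [y [E [[h1 [h2 h3]]|[h1 [h2 h3]]]]]]] := edge_lab2 e; rewrite h2 /cA /cB;
have := ltn_ord j; lia.
Qed.

Lemma lamE_inj m n : injective (@lamE m n).
Proof.
move=> e e' E.
have [j [x [y [Ee [[h1 [h2 h3]]|[h1 [h2 h3]]]]]]] := edge_lab2 e;
have [j' [x' [y' [Ee' [[h1' [h2' h3']]|[h1' [h2' h3']]]]]]] := edge_lab2 e';
have := ltn_ord j; have := ltn_ord j'; move: E; rewrite h2 h2' /cA /cB; try lia;
move=> E hj' hj; have [px jj] : pos x = pos x' /\ nat_of_ord j = j'
  by apply: mp_inj => //; lia.
all: have ex : x = x' by apply: pos_inj.
all: have ey : y = y' by apply: pos_inj; lia.
all: have ej : j = j' by apply: val_inj.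
all: by apply: val_inj; rewrite Ee Ee' ex ey ej.
Qed.


Lemma lam_inj m n : injective (@lam m n).
Proof.
move=> [v|e] [w|e'] /=.
- case: v w => [a x] [b y]; rewrite /lamV /= => E.
  have [h1 h2] : pos x = pos y /\ nat_of_ord a = b.
    by apply: mp_inj; [exact: ltn_ord | exact: ltn_ord | lia].
  have -> : x = y by apply: pos_inj.
  by have -> : a = b by apply: val_inj.
- by have := lamV_range v; have := lamE_range e'; lia.
- by have := lamV_range w; have := lamE_range e; lia.
- by move/lamE_inj => ->.
Qed.

Lemma lam_range m n (x : elt_type (Adj m n)) : 0 < lam x <= cA m n.
Proof.
case: x => [v|e] /=; last by have := lamE_range e; lia.
have := lamV_range v; rewrite /cA; lia.
Qed.

Lemma lamV_onto m n k : 0 < k <= (m * n.+1).*2 -> exists v : 'I_m * ('I_n.+1 * bool), lamV v = k.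
Proof.
move=> hk; have [|p [j [hp hj E]]] := @mp_dec m (n.+1).*2 k.-1.
  by rewrite doubleMr in hk; lia.
exists (Ordinal hj, posinv n p); rewrite /lamV /= pos_posinv //; lia.
Qed.

Lemma lam_onto m n k : 0 < k <= cA m n -> exists x : elt_type (Adj m n), lam x = k.
Proof.
move=> hk.
have hmn : m * n.+1 = m * n + m by rewrite mulnS addnC.
case: (leqP k (m * n.+1).*2) => h1.
  have [v hv] := @lamV_onto m n k (ltac:(lia)); by exists (inl v).
case: (leqP k (cB m n)) => h2.
  have [|p [j [hp hj E]]] := @mp_dec m (n.*2) (cB m n - k).
    rewrite -doubleMr /cB; move: h1 h2; rewrite /cB; lia.
  set x := posinv n p; set y := posinv n (p + 2).
  have px : pos x = p by rewrite pos_posinv //; lia.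
  have py : pos y = p + 2 by rewrite pos_posinv //; lia.
  have h : Adj m n (Ordinal hj, x) (Ordinal hj, y) by rewrite adjE /= eqxx px py /drel; lia.
  exists (inr (@mkedge m n _ _ h)); rewrite /= /lamE /= lamEs_pair; last first.
    by apply/eqP => exy; move: px py; rewrite exy; lia.
  rewrite px py /= -[p + (p + 2)]/(p + (p + 2)) (_ : p + (p + 2) = p.*2.+2); last by lia.
  rewrite Leven /=; move: E h2; rewrite /cB; lia.
have [|p [j [hp hj E]]] := @mp_dec m (n.*2.+1) (cA m n - k).
  rewrite mulnS -doubleMr; move: hk h2; rewrite /cA /cB; lia.
set x := posinv n p; set y := posinv n (p + 1).
have px : pos x = p by rewrite pos_posinv //; lia.
have py : pos y = p + 1 by rewrite pos_posinv //; lia.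
have h : Adj m n (Ordinal hj, x) (Ordinal hj, y) by rewrite adjE /= eqxx px py /drel; lia.
exists (inr (@mkedge m n _ _ h)); rewrite /= /lamE /= lamEs_pair; last first.
  by apply/eqP => exy; move: px py; rewrite exy; lia.
rewrite px py /= (_ : p + (p + 1) = p.*2.+1); last by lia.
rewrite Lodd /=; move: E hk; rewrite /cA; lia.
Qed.


Definition W m n (j a b c : nat) :=
  (m * a + j + 1) + (m * b + j + 1) + (m * c + j + 1) +
  L m n j (a + b) + L m n j (a + c) + L m n j (b + c).

Definition Cst m n := 2 * cA m n + cB m n + 2 * m + 3.

Lemma W_can m n j p : j < m -> p + 2 < (n.+1).*2 -> W m n j p (p + 1) (p + 2) = Cst m n.
Proof.
move=> hj hp; rewrite /W.
rewrite (_ : p + (p + 1) = p.*2.+1) ?Lodd; last by lia.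
rewrite (_ : p + (p + 2) = p.*2.+2) ?Leven; last by lia.
rewrite (_ : p + 1 + (p + 2) = (p + 1).*2.+1) ?Lodd; last by lia.
have := @mul_le m (p + 3) (n.+1).*2 (ltac:(lia)).
rewrite -doubleMr !mulnDr /Cst /cA /cB; lia.
Qed.

Lemma W_12 m n j a b c : W m n j a b c = W m n j b a c.
Proof. rewrite /W (addnC a b); lia. Qed.

Lemma W_23 m n j a b c : W m n j a b c = W m n j a c b.
Proof. rewrite /W (addnC b c); lia. Qed.

Lemma drel_sym a b : drel a b = drel b a.
Proof. rewrite /drel; lia. Qed.

Lemma drel_neq a b : drel a b -> a < b \/ b < a.
Proof. rewrite /drel; lia. Qed.

Lemma tri_sorted m n j a b c : j < m -> c < (n.+1).*2 ->
  a < b -> b < c -> drel a c -> W m n j a b c = Cst m n.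
Proof.
move=> hj hc hab hbc hac.
have ec : c = a + 2 by move: hac; rewrite /drel; lia.
have eb : b = a + 1 by lia.
by rewrite eb ec W_can //; lia.
Qed.

Lemma tri m n j a b c : j < m -> a < (n.+1).*2 -> b < (n.+1).*2 -> c < (n.+1).*2 ->
  drel a b -> drel a c -> drel b c -> W m n j a b c = Cst m n.
Proof.
move=> hj ha hb hc hab hac hbc.
case: (@drel_neq _ _ hab) => h1; case: (@drel_neq _ _ hac) => h2; case: (@drel_neq _ _ hbc) => h3.
- by apply: tri_sorted.
- by rewrite W_23; apply: tri_sorted.
- lia.
- by rewrite W_23 W_12; apply: tri_sorted => //; rewrite drel_sym.
- by rewrite W_12; apply: tri_sorted.
- lia.
- by rewrite W_12 W_23; apply: tri_sorted => //; rewrite drel_sym.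
- by rewrite W_12 W_23 W_12; apply: tri_sorted => //; rewrite drel_sym.
Qed.


Definition i0 : 'I_3 := @Ordinal 3 0 isT.
Definition i1 : 'I_3 := @Ordinal 3 1 isT.
Definition i2 : 'I_3 := @Ordinal 3 2 isT.

Lemma ord3 (a : 'I_3) : a = i0 \/ a = i1 \/ a = i2.
Proof.
case: a => [[|[|[|a]]] ha]; [left|right;left|right;right|by []]; exact: val_inj.
Qed.

Lemma sum3 (F : 'I_3 -> nat) : \sum_(a < 3) F a = F i0 + F i1 + F i2.
Proof.
rewrite !big_ord_recl big_ord0 addn0 addnA.
by congr (F _ + F _ + F _); apply: val_inj.
Qed.

Lemma edge_adj m n (e : edge_type (Adj m n)) u w :
  val e = [set u; w] -> u != w -> Adj m n u w.
Proof.
move=> Ev uw; have := valP e; rewrite inE => /existsP [x /existsP [y /andP [h /eqP E]]].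
rewrite E in Ev; case: (set2_eq uw (esym Ev)) => [[-> ->]|[-> ->]] //.
by rewrite adj_sym.
Qed.

Lemma lamE_pair2 m n (e : edge_type (Adj m n)) u w : val e = [set u; w] ->
  u.1 = w.1 -> u != w -> lamE e = L m n u.1 (pos u.2 + pos w.2).
Proof.
move=> E c uw; rewrite /lamE {}E; case: u w c uw => [j x] [j' y] /= <- uw.
by apply: lamEs_pair; apply: contraNneq uw => ->.
Qed.

Lemma weight_const m n V' E' :
  subgraph_iso (Adj m n) (cycle_adj 3) V' E' -> weight (Adj m n) (@lam m n) V' E' = Cst m n.
Proof.
case=> hE [f [finj [hV hadj]]].
have getE : forall a b, a != b -> exists2 e, e \in E' & val e = [set f a; f b].
  move=> a b ab; move: (hadj a b); rewrite cycle3E ab => /esym /imsetP [e he E].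
  by exists e.
have fadj : forall a b, a != b -> Adj m n (f a) (f b).
  move=> a b ab; have [e _ E] := getE a b ab; apply: (@edge_adj m n e _ _ E).
  by rewrite (inj_eq finj).
have n01 : i0 != i1 by []. have n02 : i0 != i2 by []. have n12 : i1 != i2 by [].
have [e01 h01 v01] := getE _ _ n01.
have [e02 h02 v02] := getE _ _ n02.
have [e12 h12 v12] := getE _ _ n12.
have := fadj _ _ n01; rewrite adjE => /andP [/eqP c01 d01].
have := fadj _ _ n02; rewrite adjE => /andP [/eqP c02 d02].
have := fadj _ _ n12; rewrite adjE => /andP [/eqP c12 d12].
have Eeq : E' = [set e01; e02; e12].
  apply/setP => e; rewrite !inE; apply/idP/idP; last first.
    by move=> /orP [/orP [/eqP ->|/eqP ->]|/eqP ->].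
  move=> he; have sub := hE e he.
  have [j' [x [y [Ee hd]]]] := edgeP e.
  have : (j', x) \in V' by apply: (subsetP sub); rewrite Ee set21.
  have : (j', y) \in V' by apply: (subsetP sub); rewrite Ee set22.
  rewrite hV => /imsetP [b _ Eb] /imsetP [a _ Ea].
  have ab : a != b.
    apply/eqP => ab; subst b; move: Ea Eb => <- [] exy.
    by move: hd; rewrite exy => -[] h; [move: h|move: h]; clear; lia.
  have Ev : val e = [set f a; f b] by rewrite Ee Ea Eb.
  have F : forall e', val e = val e' -> e == e' by move=> e' h; apply/eqP/val_inj.
  move: ab Ev; case: (ord3 a) => [->|[->|->]]; case: (ord3 b) => [->|[->|->]] => ab Ev //.
  all: try by rewrite eqxx in ab.
  1-6: first [ by rewrite (F e01) //; rewrite Ev v01 // setUC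
        | by rewrite (F e02) ?orbT //; rewrite Ev v02 // setUC
        | by rewrite (F e12) ?orbT //; rewrite Ev v12 // setUC ].
have neq : forall (e e' : edge_type (Adj m n)) a b c d, val e = [set f a; f b] -> val e' = [set f c; f d] ->
    a != b -> (a != c) || (b != d) -> (a != d) || (b != c) -> e != e'.
  move=> e e' a b c d Ea Ec ab h1 h2; apply/eqP => ee; move: Ea; rewrite ee Ec => /esym E.
  have fab : f a != f b by rewrite (inj_eq finj).
  case: (set2_eq fab E) => [[/finj ea /finj eb]|[/finj ea /finj eb]]; subst.
    by rewrite !eqxx in h1.
  by rewrite !eqxx in h2.
rewrite /weight hV big_imset /=; last by move=> a b _ _; apply: finj.
rewrite (eq_bigl (fun _ => true)); last by move=> a; rewrite inE.
rewrite sum3 Eeq sum_set3; first last.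
- by apply: (neq _ _ _ _ _ _ v02 v12).
- by apply: (neq _ _ _ _ _ _ v01 v12).
- by apply: (neq _ _ _ _ _ _ v01 v02).
rewrite /= (@lamE_pair2 m n e01 _ _ v01) // ?(inj_eq finj) // (@lamE_pair2 m n e02 _ _ v02) // ?(inj_eq finj) //.
rewrite (@lamE_pair2 m n e12 _ _ v12) // ?(inj_eq finj) // /lamV -c12 -c01.
have T := @tri m n (f i0).1 _ _ _ (ltn_ord _) (pos_lt (f i0).2) (pos_lt (f i1).2) (pos_lt (f i2).2) d01 d02 d12.
by move: T; rewrite /W !addnA.
Qed.


Lemma card_total m n :
  #|{: 'I_m * ('I_n.+1 * bool)}| + #|edge_set (Adj m n)| = cA m n.
Proof.
have -> : #|edge_set (Adj m n)| = #|edge_type (Adj m n)|.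
  rewrite (card_sig (fun e => e \in edge_set (Adj m n))); apply: eq_card => e //.
rewrite -card_sum -/(elt_type (Adj m n)) cardE -(size_map (@lam m n)).
rewrite -(size_iota 1 (cA m n)); apply: perm_size; apply: uniq_perm.
- by rewrite map_inj_uniq ?enum_uniq //; exact: lam_inj.
- exact: iota_uniq.
move=> k; rewrite mem_iota; apply/mapP/idP.
  by case=> x _ ->; have := lam_range x; lia.
move=> hk; have [x hx] := @lam_onto m n k (ltac:(lia)).
by exists x; [rewrite mem_enum | rewrite hx].
Qed.

Lemma tl_cover m n : 0 < n -> forall e : edge_type (Adj m n),
  exists V' E', subgraph_iso (Adj m n) (cycle_adj 3) V' E' /\ e \in E'.
Proof.
move=> hn e; have [j [x [y [Ee hd]]]] := edgeP e.
have hy := pos_lt y; have hx := pos_lt x.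
set t := if pos x + 2 < (n.+1).*2 then pos x else (pos x).-1.
have [ht1 [ht2 ht3]] : t + 2 < (n.+1).*2 /\ t <= pos x /\ pos y <= t + 2.
  by rewrite /t; case: ifP; lia.
pose f := fun a : 'I_3 => (j, posinv n (t + a)).
have pf : forall a : 'I_3, pos (f a).2 = t + a.
  by move=> a; rewrite pos_posinv //; have := ltn_ord a; lia.
have finj : injective f.
  by move=> a b /(congr1 (fun z => pos z.2)); rewrite !pf => h; apply: ord_inj; lia.
have inV : forall a, f a \in f @: [set: 'I_3] by move=> a; apply: imset_f; rewrite inE.
exists (f @: [set: 'I_3]), [set e' : edge_type (Adj m n) | val e' \subset f @: [set: 'I_3]].
split; last first.
  rewrite inE Ee; apply/subsetP => z; rewrite !inE => /orP [] /eqP ->.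
  - have ha : pos x - t < 3 by lia.
    have -> : (j, x) = f (Ordinal ha).
      by rewrite /f /= (_ : t + (pos x - t) = pos x) ?posinv_pos //; lia.
    exact: inV.
  - have ha : pos y - t < 3 by lia.
    have -> : (j, y) = f (Ordinal ha).
      by rewrite /f /= (_ : t + (pos y - t) = pos y) ?posinv_pos //; lia.
    exact: inV.
split; first by move=> e'; rewrite inE.
exists f; split => //; split => //.
move=> a b; rewrite cycle3E; case: (eqVneq a b) => [<-|ab] /=.
  symmetry; apply/negbTE/imsetP => [[e' _ E]].
  have [j' [x' [y' [E' hd']]]] := edgeP e'.
  move: E; rewrite E' setUid => E.
  have : (j', x') \in [set f a] by rewrite E set21.
  have : (j', y') \in [set f a] by rewrite E set22.
  rewrite !inE => /eqP ey /eqP ex; move: ex; rewrite -ey => -[] exy.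
  by move: hd'; rewrite exy; lia.
symmetry; apply/imsetP.
have h : Adj m n (f a) (f b).
  rewrite adjE /= eqxx /= !pf.
  have : nat_of_ord a != b by apply: contraNneq ab => h; apply/eqP; apply: ord_inj.
  have := ltn_ord a; have := ltn_ord b; rewrite /drel; lia.
exists (@mkedge m n _ _ h) => //.
rewrite inE /=; apply/subsetP => z; rewrite !inE => /orP [] /eqP ->; exact: inV.
Qed.

Unset Implicit Arguments.

Theorem theorem4 (m n : nat) (hm : 2 <= m) (hn : 3 <= n) :
  H_supermagic (copies_adj m (TL_adj n)) (cycle_adj 3).
Proof.
case: n hn => [|n] // hn.
split.
  have hn0 : 0 < n by lia.
  move=> e; exact: (@tl_cover m n hn0 e).
exists (@lam m n); split; last first.
  move=> k; rewrite card_prod card_ord card_prod card_ord card_bool.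
  split.
    move=> hk; have hk' : 0 < k <= (m * n.+1).*2 by rewrite -muln2 -mulnA.
    have [v hv] := @lamV_onto m n k hk'; by exists v.
  by case=> v <- /=; have := lamV_range v; rewrite -muln2 -mulnA.
split; last by exists (Cst m n); exact: weight_const.
split; first exact: lam_inj.
move=> k; rewrite card_total; split.
  by move=> hk; apply: lam_onto.
by case=> x <-; apply: lam_range.
Qed.
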